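(* Let $x_1,x_2,y_1,y_2\in\mathbb{R}$, $d>0$, and $$f(x)=\big((x-x_1)^2+y_1^2+d^2\big)\big((x-x_2)^2+y_2^2+d^2\big),\quad x\in\mathbb{R}.$$ If $|y_1|\le|y_2|$, then the optimal (minimizing) antenna location $x^*$ of $f$ satisfies $|x^*-x_1|\le|x^*-x_2|$ (i.e., it is closer to user 1); otherwise ($|y_1|>|y_2|$), $|x^*-x_1|\ge|x^*-x_2|$. (Here $x^*$ is understood as a global minimizer of $f$ that can be chosen with the stated property.)
   Context: $f$ is the high-SNR approximation of the two-user TDMA sum-throughput maximization objective for a pinching antenna at $(x,0,d)$ serving users at $(x_1,y_1,0)$ and $(x_2,y_2,0)$: maximizing throughput is approximated by minimizing $f$. *)

(* Defs.v *)
From Stdlib Require Import Reals.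
Open Scope R_scope.

(* High-SNR TDMA objective for a pinching antenna at (x,0,d), users at
   (x1,y1,0) and (x2,y2,0). *)
Definition pinch_obj (x1 y1 x2 y2 d x : R) : R :=
  ((x - x1)^2 + y1^2 + d^2) * ((x - x2)^2 + y2^2 + d^2).

(* Main.v *)
Require Import Defs.
From Stdlib Require Import Reals Lra Psatz.
Open Scope R_scope.

Lemma exmin (x1 x2 y1 y2 d : R) (hd : 0 < d) :
  exists m, forall x, pinch_obj x1 y1 x2 y2 d m <= pinch_obj x1 y1 x2 y2 d x.
Proof.
  set (Cc := pinch_obj x1 y1 x2 y2 d x1).
  assert (HC : 0 <= Cc).
  { unfold Cc, pinch_obj.
    assert (0 <= (x1-x1)^2 + y1^2 + d^2) by (pose proof (pow2_ge_0 (x1-x1)); pose proof (pow2_ge_0 (x1-x2)); pose proof (pow2_ge_0 y1); pose proof (pow2_ge_0 y2); pose proof (pow2_ge_0 d); lra).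
    assert (0 <= (x1-x2)^2 + y2^2 + d^2) by (pose proof (pow2_ge_0 (x1-x1)); pose proof (pow2_ge_0 (x1-x2)); pose proof (pow2_ge_0 y1); pose proof (pow2_ge_0 y2); pose proof (pow2_ge_0 d); lra).
    apply Rmult_le_pos; assumption. }
  assert (hd2 : 0 < d^2) by nra.
  set (K := Cc / d^2 + 1).
  assert (HK : Cc <= K^2 * d^2).
  { assert (Cc / d^2 * d^2 = Cc) by (field; lra).
    assert (0 <= Cc / d^2) by (unfold Rdiv; apply Rmult_le_pos; [lra | left; apply Rinv_0_lt_compat; lra]).
    unfold K; nra. }
  assert (HK0 : 1 <= K) by (unfold K; assert (0 <= Cc / d^2) by (unfold Rdiv; apply Rmult_le_pos; [lra | left; apply Rinv_0_lt_compat; lra]); lra).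
  destruct (continuity_ab_min (pinch_obj x1 y1 x2 y2 d) (x1 - K) (x1 + K)) as [m [Hm Hb]].
  - lra.
  - intros c _. unfold pinch_obj. reg.
  - exists m. intros x.
    destruct (Rle_dec (x1 - K) x) as [h1|h1]; [destruct (Rle_dec x (x1 + K)) as [h2|h2]|].
    + apply Hm; lra.
    + apply Rle_trans with Cc. apply Hm; lra.
      unfold pinch_obj. assert ((x-x1)^2 >= K^2) by nra.
      pose proof (pow2_ge_0 y1). pose proof (pow2_ge_0 y2).
      pose proof (pow2_ge_0 (x-x2)). pose proof (pow2_ge_0 (x-x1)). pose proof (pow2_ge_0 d).
      assert (E1 : ((x - x1)^2 + y1^2 + d^2) * ((x - x2)^2 + y2^2 + d^2) - (x-x1)^2 * d^2
        = (x-x1)^2 * ((x-x2)^2 + y2^2) + (y1^2+d^2) * ((x - x2)^2 + y2^2 + d^2)) by ring.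
      assert (0 <= (x-x1)^2 * ((x-x2)^2 + y2^2)) by (apply Rmult_le_pos; lra).
      assert (0 <= (y1^2+d^2) * ((x - x2)^2 + y2^2 + d^2)) by (apply Rmult_le_pos; lra).
      assert (K^2 * d^2 <= (x-x1)^2 * d^2) by (apply Rmult_le_compat_r; lra).
      lra.
    + apply Rle_trans with Cc. apply Hm; lra.
      unfold pinch_obj. assert ((x-x1)^2 >= K^2) by nra.
      pose proof (pow2_ge_0 y1). pose proof (pow2_ge_0 y2).
      pose proof (pow2_ge_0 (x-x2)). pose proof (pow2_ge_0 (x-x1)). pose proof (pow2_ge_0 d).
      assert (E1 : ((x - x1)^2 + y1^2 + d^2) * ((x - x2)^2 + y2^2 + d^2) - (x-x1)^2 * d^2
        = (x-x1)^2 * ((x-x2)^2 + y2^2) + (y1^2+d^2) * ((x - x2)^2 + y2^2 + d^2)) by ring.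
      assert (0 <= (x-x1)^2 * ((x-x2)^2 + y2^2)) by (apply Rmult_le_pos; lra).
      assert (0 <= (y1^2+d^2) * ((x - x2)^2 + y2^2 + d^2)) by (apply Rmult_le_pos; lra).
      assert (K^2 * d^2 <= (x-x1)^2 * d^2) by (apply Rmult_le_compat_r; lra).
      lra.
Qed.

Lemma refl_eq (x1 x2 y1 y2 d x : R) :
  pinch_obj x1 y1 x2 y2 d x - pinch_obj x1 y1 x2 y2 d (x1 + x2 - x)
  = ((x - x1)^2 - (x - x2)^2) * ((y2^2 + d^2) - (y1^2 + d^2)).
Proof. unfold pinch_obj. ring. Qed.

Lemma abs_le_sq a b : a^2 <= b^2 -> Rabs a <= Rabs b.
Proof.
  intros h. rewrite <- (pow2_abs a), <- (pow2_abs b) in h.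
  pose proof (Rabs_pos a); pose proof (Rabs_pos b). nra.
Qed.

Theorem lemma4 (x1 x2 y1 y2 d : R) (hd : 0 < d) :
  exists xs : R,
    (forall x : R, pinch_obj x1 y1 x2 y2 d xs <= pinch_obj x1 y1 x2 y2 d x) /\
    (Rabs y1 <= Rabs y2 -> Rabs (xs - x1) <= Rabs (xs - x2)) /\
    (Rabs y1 > Rabs y2 -> Rabs (xs - x1) >= Rabs (xs - x2)).
Proof.
  destruct (exmin x1 x2 y1 y2 d hd) as [m Hm].
  pose proof (refl_eq x1 x2 y1 y2 d m) as E.
  assert (Hy : y1^2 = Rabs y1 ^2 /\ y2^2 = Rabs y2^2) by (rewrite !pow2_abs; auto).
  pose proof (Rabs_pos y1); pose proof (Rabs_pos y2).
  assert (Hr1 : (x1 + x2 - m - x1) = -(m - x2)) by ring.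
  assert (Hr2 : (x1 + x2 - m - x2) = -(m - x1)) by ring.
  destruct (Rle_dec (Rabs y1) (Rabs y2)) as [h|h].
  - destruct (Rle_dec ((m-x1)^2) ((m-x2)^2)) as [g|g].
    + exists m. split; [exact Hm|]. split; intros; [apply abs_le_sq; lra | lra].
    + exists (x1 + x2 - m). split.
      * intros x. specialize (Hm x).
        assert (0 <= (y2^2+d^2)-(y1^2+d^2)) by (destruct Hy as [-> ->]; nra).
        assert (0 <= ((m - x1)^2 - (m - x2)^2) * ((y2^2 + d^2) - (y1^2 + d^2)))
          by (apply Rmult_le_pos; lra).
        lra.
      * split; intros; [|lra]. rewrite Hr1, Hr2, !Rabs_Ropp.
        apply abs_le_sq; lra.
  - destruct (Rle_dec ((m-x2)^2) ((m-x1)^2)) as [g|g].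
    + exists m. split; [exact Hm|]. split; intros; [lra|].
      apply Rle_ge, abs_le_sq; lra.
    + exists (x1 + x2 - m). split.
      * intros x. specialize (Hm x).
        assert (0 <= (y1^2+d^2)-(y2^2+d^2)) by (destruct Hy as [-> ->]; nra).
        assert (0 <= ((m - x2)^2 - (m - x1)^2) * ((y1^2 + d^2) - (y2^2 + d^2)))
          by (apply Rmult_le_pos; lra).
        assert (((m - x1)^2 - (m - x2)^2) * ((y2^2 + d^2) - (y1^2 + d^2)) =
          ((m - x2)^2 - (m - x1)^2) * ((y1^2 + d^2) - (y2^2 + d^2))) by ring.
        lra.
      * split; intros; [lra|]. rewrite Hr1, Hr2, !Rabs_Ropp.
        apply Rle_ge, abs_le_sq; lra.
Qed.
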